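(* Let $Q\in\mathcal{P}$ have balance coefficient $\beta$ (so $\beta\ge \tfrac12$). Then for every $0<v<1$, $$L(v)\;\le\; D^*(v,Q)\;\le\; \mathrm{KL}_2\!\left(\beta-\tfrac{v}{2},\,\beta\right).$$
   Context: Let $(\Omega,\mathcal{F},\mu)$ be a finite or $\sigma$-finite measure space, and let $\mathcal{P}$ be the set of probability measures on $(\Omega,\mathcal{F})$ absolutely continuous with respect to $\mu$. For $P,Q\in\mathcal{P}$ the lower-case letters $p,q$ denote their densities with respect to $\mu$. The Kullback–Leibler divergence is $D(P\Vert Q)=\int \ln\frac{dP}{dQ}\,dP$ if $P\ll Q$, and $D(P\Vert Q)=+\infty$ otherwise. The total variation distance is $V(P,Q)=\int_\Omega |p-q|\,d\mu$. For $v>0$ and $Q\in\mathcal{P}$ define $D^*(v,Q)=\inf\{D(P\Vert Q): P\in\mathcal{P},\ V(P,Q)\ge v\}$, with $\inf\emptyset=+\infty$. For $p,q\in[0,1]$ let $\mathrm{KL}_2(p,q)=p\ln\frac{p}{q}+(1-p)\ln\frac{1-p}{1-q}$, with the conventions $0\ln(0/x)=0$ and $a\ln(a/0)=+\infty$ for $a>0$. In particular $\mathrm{KL}_2(1-\tfrac v2,1)=+\infty$. Vajda's function is $L(v)=\inf\{D(P\Vert Q): V(P,Q)=v\}$, where the infimum is over all pairs of probability measures $P,Q$ on a common measurable space. The range of $Q$ is $\mathcal{R}(Q)=\{Q(A):A\in\mathcal{F}\}$. The balance coefficient of $Q$ is $\beta=\inf\{x\in\mathcal{R}(Q): x\ge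 \tfrac12\}$. *)

(* Defs.v *)
From HB Require Import structures.
From mathcomp Require Import all_boot all_order all_algebra.
From mathcomp Require Import all_classical all_reals all_analysis.
Set Implicit Arguments. Unset Strict Implicit. Unset Printing Implicit Defensive.
Import Order.TTheory GRing.Theory Num.Theory.
Import numFieldNormedType.Exports.
Local Open Scope classical_set_scope.
Local Open Scope ring_scope.
Local Open Scope charge_scope.

Section defs.
Context {R : realType} {d : measure_display} {T : measurableType d}.

Definition Pcal (mu : {sigma_finite_measure set T -> \bar R}) :
  set (probability T R) := [set P | P `<< mu].

Definition dens (mu : {sigma_finite_measure set T -> \bar R})
  (P : probability T R) : T -> \bar R :=
  ('d (charge_of_finite_measure P) '/d mu).

Definition TV (mu : {sigma_finite_measure set T -> \bar R})
  (P Q : probability T R) : \bar R :=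
  (\int[mu]_x `| dens mu P x - dens mu Q x |)%E.

Definition KL (P Q : probability T R) : \bar R :=
  if pselect (P `<< Q) then
    (\int[P]_x (ln (fine (('d (charge_of_finite_measure P) '/d Q) x)))%:E)%E
  else +oo%E.

Definition Dstar (mu : {sigma_finite_measure set T -> \bar R}) (v : R)
  (Q : probability T R) : \bar R :=
  ereal_inf [set KL P Q | P in [set P | Pcal mu P /\ (v%:E <= TV mu P Q)%E]].

Definition rangeQ (Q : probability T R) : set R :=
  [set x | exists2 A, measurable A & Q A = x%:E].

Definition balance (Q : probability T R) : R :=
  inf [set x | rangeQ Q x /\ 1/2 <= x].

End defs.

Definition xlnxy {R : realType} (a b : R) : \bar R :=
  if a == 0 then 0%E else if b == 0 then +oo%E else (a * ln (a / b))%:E.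

Definition KL2 {R : realType} (p q : R) : \bar R :=
  (xlnxy p q + xlnxy (1 - p) (1 - q))%E.

(* Vajda's function: inf of D(P||Q) over all pairs P,Q of probability measures
   on a common measurable space with V(P,Q) = v; V is computed w.r.t. any
   sigma-finite measure dominating both P and Q (e.g. P+Q). *)
Definition Vajda {R : realType} (v : R) : \bar R :=
  ereal_inf [set x | exists (d : measure_display) (T : measurableType d)
     (mu : {sigma_finite_measure set T -> \bar R}) (P Q : probability T R),
     [/\ P `<< mu, Q `<< mu, TV mu P Q = v%:E & x = KL P Q]].

(* Main.v *)
Require Import Defs.
From HB Require Import structures.
From mathcomp Require Import all_boot all_order all_algebra.
From mathcomp Require Import all_classical all_reals all_analysis.
From mathcomp Require Import measurable_realfun.
From mathcomp Require Import ring lra.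
Module Helpers.
Set Implicit Arguments. Unset Strict Implicit. Unset Printing Implicit Defensive.
Import Order.TTheory GRing.Theory Num.Theory.
Import numFieldNormedType.Exports.
Local Open Scope classical_set_scope.
Local Open Scope ring_scope.
Local Open Scope charge_scope.
Section gen.
Context d (T : measurableType d) (R : realType).
Local Open Scope ereal_scope.

Lemma le_int_meas (mu : {measure set T -> \bar R}) (D : set T) (f g : T -> \bar R) :
  measurable D -> measurable_fun D f -> measurable_fun D g ->
  {in D, forall x, f x <= g x} -> \int[mu]_(x in D) f x <= \int[mu]_(x in D) g x.
Proof.
move=> mD mf mg fg; rewrite integralE [leRHS]integralE leeB//.
- apply: ge0_le_integral => //.
  + exact: measurable_funepos.
  + exact: measurable_funepos.
  + by move=> x /mem_set; exact: funepos_le.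
- apply: ge0_le_integral => //.
  + exact: measurable_funeneg.
  + exact: measurable_funeneg.
  + by move=> x /mem_set; exact: funeneg_le.
Qed.
End gen.

Section dmeas.
Context d (T : measurableType d) (R : realType).
Variable (Q : probability T R) (g : T -> R).
Hypotheses (g0 : forall x, (0 <= g x)%R) (mg : measurable_fun setT g)
  (g1 : (\int[Q]_x (g x)%:E = 1)%E).

Definition dmeas (A : set T) : \bar R := (\int[Q]_(x in A) (g x)%:E)%E.

Let dmeas0 : dmeas set0 = 0%E.
Proof. by rewrite /dmeas integral_set0. Qed.

Let dmeas_ge0 A : (0 <= dmeas A)%E.
Proof. by apply: integral_ge0 => x _; rewrite lee_fin. Qed.

Let dmeas_sadd : semi_sigma_additive dmeas.
Proof.
apply: semi_sigma_additive_nng_induced.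
  exact/measurable_EFinP.
by move=> x; rewrite lee_fin.
Qed.

HB.instance Definition _ := isMeasure.Build _ _ _ dmeas dmeas0 dmeas_ge0 dmeas_sadd.

Let dmeasT : dmeas setT = 1%E.
Proof. exact: g1. Qed.

HB.instance Definition _ := Measure_isProbability.Build _ _ _ dmeas dmeasT.

Definition dprob : probability T R := dmeas.
End dmeas.
Section cov.
Context d (T : measurableType d) (R : realType).
Local Open Scope ereal_scope.
Variables (P Q : probability T R) (g : T -> R).
Hypotheses (g0 : forall x, (0 <= g x)%R) (mg : measurable_fun setT g)
  (PA : forall A, measurable A -> P A = \int[Q]_(x in A) (g x)%:E).

Lemma dens_dom : P `<< Q.
Proof.
apply/null_content_dominatesP => A mA QA0.
rewrite PA//; apply: null_set_integral => //.
by apply/measurable_EFinP; exact: measurable_funTS.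
Qed.

Lemma gint : Q.-integrable setT (EFin \o g).
Proof.
apply/integrableP; split; first exact/measurable_EFinP.
rewrite (eq_integral (fun x => (g x)%:E)); last by move=> x _; rewrite /comp gee0_abs ?lee_fin.
by rewrite -PA// -ge0_fin_numE// fin_num_measure.
Qed.

Lemma ae_RNSF : ae_eq Q setT (Radon_Nikodym_SigmaFinite.f P Q) (EFin \o g).
Proof.
apply: integral_ae_eq => //.
- exact: Radon_Nikodym_SigmaFinite.f_integrable dens_dom.
- exact/measurable_EFinP.
- move=> E _ mE; rewrite -Radon_Nikodym_SigmaFinite.f_integral//.
  + exact: PA.
  + exact: dens_dom.
Qed.

Lemma ae_RN : ae_eq Q setT ('d (charge_of_finite_measure P) '/d Q) (EFin \o g).
Proof.
apply: ae_eq_trans ae_RNSF.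
apply: ae_eq_sym; apply: ae_eq_Radon_Nikodym_SigmaFinite => //.
exact: dens_dom.
Qed.

Lemma cov_ge0 (h : T -> \bar R) : measurable_fun setT h -> (forall x, 0 <= h x) ->
  \int[P]_x h x = \int[Q]_x (h x * (g x)%:E).
Proof.
move=> mh h0.
rewrite -(@Radon_Nikodym_SigmaFinite.change_of_variables _ _ _ P Q)//; last exact: dens_dom.
apply: ae_eq_integral => //.
- apply: emeasurable_funM => //.
  exact: measurable_int (Radon_Nikodym_SigmaFinite.f_integrable dens_dom).
- by apply: emeasurable_funM => //; exact/measurable_EFinP.
- exact: ae_eqe_mul2l ae_RNSF.
Qed.

Lemma funepos_mulg (h : T -> \bar R) x :
  (fun y => h y * (g y)%:E)^\+ x = h^\+ x * (g x)%:E.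
Proof.
rewrite !funeposE; have [hx0|hx0] := leP 0 (h x).
- have H : 0 <= h x * (g x)%:E by rewrite mule_ge0// lee_fin.
  by rewrite ?(max_l H) ?(max_l hx0).
- have H : h x * (g x)%:E <= 0 by rewrite mule_le0_ge0 ?lee_fin// ltW.
  by rewrite ?(max_r H) ?(max_r (ltW hx0)) ?mul0e.
Qed.

Lemma funeneg_mulg (h : T -> \bar R) x :
  (fun y => h y * (g y)%:E)^\- x = h^\- x * (g x)%:E.
Proof.
rewrite !funenegE; have [hx0|hx0] := leP 0 (h x).
- have H : - (h x * (g x)%:E) <= 0 by rewrite oppe_le0 mule_ge0// lee_fin.
  have H' : - h x <= 0 by rewrite oppe_le0.
  by rewrite ?(max_r H) ?(max_r H') ?mul0e.
- have H : 0 <= - (h x * (g x)%:E) by rewrite oppe_ge0 mule_le0_ge0 ?lee_fin// ltW.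
  have H' : 0 <= - h x by rewrite oppe_ge0 ltW.
  by rewrite ?(max_l H) ?(max_l H') ?mulNe.
Qed.

Lemma cov (h : T -> \bar R) : measurable_fun setT h ->
  \int[P]_x h x = \int[Q]_x (h x * (g x)%:E).
Proof.
move=> mh; rewrite integralE [RHS]integralE.
under [X in _ = X - _]eq_integral do rewrite funepos_mulg.
under [X in _ = _ - X]eq_integral do rewrite funeneg_mulg.
rewrite (cov_ge0 (measurable_funepos mh) (funepos_ge0 h)).
by rewrite (cov_ge0 (measurable_funeneg mh) (funeneg_ge0 h)).
Qed.


Lemma KL_dens : KL P Q = \int[Q]_x ((g x) * ln (g x))%:E.
Proof.
rewrite /KL; case: pselect => [PQ|H]; last by case: (H dens_dom).
have aeP : ae_eq P setT (fun x => (ln (fine ('d (charge_of_finite_measure P) '/d Q x)))%:E)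
   (fun x => (ln (g x))%:E).
  have [N [mN QN sub]] := ae_RN.
  exists N; split => //.
    by apply: ((null_content_dominatesP _ _).1 dens_dom).
  move=> x /= Hx; apply: sub => /= H; apply: Hx => Tx.
  by rewrite /= H.
rewrite (@ae_eq_integral _ _ _ P setT _ _ measurableT _ _ aeP)//; first last.
- apply/measurable_EFinP; apply: measurableT_comp => //.
- apply/measurable_EFinP; apply: measurableT_comp => //.
  apply: measurableT_comp => //.
rewrite cov; last by apply/measurable_EFinP; apply: measurableT_comp.
by apply: eq_integral => x _; rewrite -EFinM mulrC.
Qed.

Variable mu : {sigma_finite_measure set T -> \bar R}.
Hypothesis Qmu : Q `<< mu.

Let fQ := Radon_Nikodym_SigmaFinite.f Q mu.

Lemma dens_P_ae : ae_eq mu setT (dens mu P) (fun x => (g x)%:E * fQ x).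
Proof.
have Pmu : P `<< mu := null_dominates_trans dens_dom Qmu.
apply: integral_ae_eq => //.
- exact: Radon_Nikodym_integrable.
- apply: emeasurable_funM; first exact/measurable_EFinP.
  exact: measurable_int (Radon_Nikodym_SigmaFinite.f_integrable Qmu).
- move=> E _ mE; rewrite -Radon_Nikodym_integral//.
  rewrite (@Radon_Nikodym_SigmaFinite.change_of_variables _ _ _ Q mu)//.
  + by move: (PA mE); rewrite /charge_of_finite_measure.
  + by apply/measurable_EFinP; exact: measurable_funTS.
Qed.

Lemma dens_Q_ae : ae_eq mu setT (dens mu Q) fQ.
Proof. exact/ae_eq_sym/ae_eq_Radon_Nikodym_SigmaFinite. Qed.

Lemma TV_dens : TV mu P Q = \int[Q]_x (`|g x - 1|)%:E.
Proof.
have Pmu : P `<< mu := null_dominates_trans dens_dom Qmu.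
have mfQ : measurable_fun setT fQ.
  exact: measurable_int (Radon_Nikodym_SigmaFinite.f_integrable Qmu).
rewrite /TV (@ae_eq_integral _ _ _ mu setT (fun x => (`|g x - 1|)%:E * fQ x) _ measurableT) //.
- rewrite (@Radon_Nikodym_SigmaFinite.change_of_variables _ _ _ Q mu)//.
  apply/measurable_EFinP; apply: measurableT_comp => //.
  by apply: measurable_funB.
- apply: measurableT_comp => //; apply: emeasurable_funB.
  + exact: measurable_int (@Radon_Nikodym_integrable _ _ _ (charge_of_finite_measure P) mu Pmu).
  + exact: measurable_int (@Radon_Nikodym_integrable _ _ _ (charge_of_finite_measure Q) mu Qmu).
- apply: (emeasurable_funM (f := fun x => (`|g x - 1|)%:E) (g := fQ)) => //.
  apply/measurable_EFinP; apply: measurableT_comp => //.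
  by apply: measurable_funB.
- apply: filterS2 dens_P_ae dens_Q_ae => x h1 h2 _.
  rewrite h1// h2//.
  have := Radon_Nikodym_SigmaFinite.f_fin_num Qmu x.
  have := Radon_Nikodym_SigmaFinite.f_ge0 Qmu x.
  rewrite /fQ; case: (Radon_Nikodym_SigmaFinite.f Q mu x) => [r| |] //=.
  rewrite lee_fin => r0 _.
  rewrite -EFinM; congr EFin.
  by rewrite -{2}(mul1r r) -mulrBl normrM (ger0_norm r0).
Qed.

End cov.
Section realineq.
Context (R : realType).

Lemma ln_le_sub1 (x : R) : 0 < x -> ln x <= x - 1.
Proof.
move=> x0; have := @le_ln1Dx R (x - 1).
rewrite addrCA subrr addr0; apply; lra.
Qed.

Lemma xlnx_ge (r : R) : 0 <= r -> r - 1 <= r * ln r.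
Proof.
rewrite le_eqVlt => /orP[/eqP<-|r0]; first by rewrite ln0 ?mulr0//; lra.
have h := @ln_le_sub1 r^-1 (ltac:(by rewrite invr_gt0)).
rewrite lnV ?posrE// in h.
have h2 : r * (- ln r) <= r * (r^-1 - 1) by rewrite ler_wpM2l// ltW.
rewrite mulrBr mulfV ?gt_eqF// mulr1 in h2; lra.
Qed.

Lemma conv_ineq (r l : R) : 0 <= r -> 0 < l <= 1 ->
  (l * r + (1 - l)) * ln (l * r + (1 - l)) <= l * (r * ln r).
Proof.
move=> r0 /andP[l0 l1].
set s := l * r + (1 - l).
have s0 : 0 <= s by rewrite /s; nra.
move: r0; rewrite le_eqVlt => /orP[/eqP r0|r0].
  rewrite /s -r0 !mulr0 add0r mul0r mulr0.
  have : ln (1 - l) <= 0 by apply: ln_le0; lra.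
  have : 0 <= 1 - l by lra.
  nra.
have sp : 0 < s by rewrite /s; nra.
have h1 := ln_le_sub1 sp.
have h2 := ln_le_sub1 (divr_gt0 sp r0).
rewrite ln_div ?posrE// in h2.
have h3 : r * (ln s - ln r) <= r * (s / r - 1) by rewrite ler_wpM2l// ltW.
have e2 : r * (s / r - 1) = s - r.
  by rewrite mulrBr mulr1 mulrC -mulrA mulVf ?gt_eqF// mulr1.
rewrite e2 mulrBr in h3.
have h4 : l * (r * ln s - r * ln r) <= l * (s - r) by rewrite ler_wpM2l// ltW.
have h5 : (1 - l) * ln s <= (1 - l) * (s - 1) by rewrite ler_wpM2l//; lra.
have e : s * ln s = l * (r * ln s) + (1 - l) * ln s by rewrite /s; ring.
rewrite e; rewrite /s in h4 h5 *; nra.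
Qed.

End realineq.
Section scale.
Context d (T : measurableType d) (R : realType).
Local Open Scope ereal_scope.

Lemma int_scale (mu : {measure set T -> \bar R}) (f : T -> R) (k : R) :
  (0 <= k)%R -> measurable_fun setT f ->
  \int[mu]_x (fun x => (f x)%:E)^\- x < +oo ->
  \int[mu]_x (k * f x)%:E = k%:E * \int[mu]_x (f x)%:E.
Proof.
move=> k0 mf fin.
have mF : measurable_fun setT (fun x => (f x)%:E) by exact/measurable_EFinP.
under eq_integral do rewrite EFinM.
rewrite integralE (ge0_funeposM _ k0) (ge0_funenegM _ k0).
rewrite (ge0_integralZl_EFin mu measurableT (fun x _ => funepos_ge0 _ x) (measurable_funepos mF) k0).
rewrite (ge0_integralZl_EFin mu measurableT (fun x _ => funeneg_ge0 _ x) (measurable_funeneg mF) k0).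
have -> : \int[mu]_x (f x)%:E = \int[mu]_x (fun x => (f x)%:E)^\+ x -
   \int[mu]_x (fun x => (f x)%:E)^\- x by exact: integralE.
rewrite [RHS]muleBr//.
rewrite fin_num_adde_defl// fin_numN ge0_fin_numE//.
by apply: integral_ge0 => x _; exact: funeneg_ge0.
Qed.

End scale.

Section lower.
Context d (T : measurableType d) (R : realType).
Local Open Scope ereal_scope.
Variables (mu : {sigma_finite_measure set T -> \bar R}) (Q : probability T R).
Hypothesis Qmu : Q `<< mu.

Lemma int_one : \int[Q]_x (cst 1%R x)%:E = 1.
Proof. by have := @integral_cst _ _ _ Q setT measurableT 1; rewrite mul1e => ->; exact: probability_setT. Qed.

Lemma lower_one (P : probability T R) (v : R) : (0 < v)%R ->
  v%:E <= TV mu P Q -> Vajda v <= KL P Q.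
Proof.
move=> v0 Htv.
have [PQ|nPQ] := pselect (P `<< Q); last first.
  by rewrite /KL; destruct pselect as [h|h]; [case: (nPQ h)|rewrite leey].
pose f := Radon_Nikodym_SigmaFinite.f P Q.
pose r := fun x => fine (f x).
have r0 : forall x, (0 <= r x)%R.
  by move=> x; rewrite /r fine_ge0// Radon_Nikodym_SigmaFinite.f_ge0.
have mf : measurable_fun setT f.
  exact: measurable_int (Radon_Nikodym_SigmaFinite.f_integrable PQ).
have mr : measurable_fun setT r.
  by apply: measurableT_comp => //; exact: fine_measurable.
have PA : forall A, measurable A -> P A = \int[Q]_(x in A) (r x)%:E.
  move=> A mA; rewrite (Radon_Nikodym_SigmaFinite.f_integral PQ mA).
  by apply: eq_integral => x _; rewrite /r fineK// Radon_Nikodym_SigmaFinite.f_fin_num.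
have KLe := KL_dens r0 mr PA.
have TVe := TV_dens r0 mr PA Qmu.
have int_r : \int[Q]_x (r x)%:E = 1 by rewrite -PA// probability_setT.
set X := \int[Q]_x (`|r x - 1|)%:E in TVe.
have X0 : 0 <= X by apply: integral_ge0 => x _; rewrite lee_fin.
have X2 : X <= 2%:E.
  apply: (@le_trans _ _ (\int[Q]_x ((r x)%:E + (cst 1%R x)%:E))).
    apply: le_int_meas => //.
    - apply/measurable_EFinP; apply: measurableT_comp => //.
      exact: measurable_funB.
    - apply: emeasurable_funD => //; exact/measurable_EFinP.
    - move=> x _; rewrite -EFinD lee_fin /=.
      have := r0 x; rewrite ler_norml; move=> ?; apply/andP; split; lra.
  rewrite (ge0_integralD Q measurableT (fun x _ => (r0 x : (0 <= (r x)%:E))) ((measurable_EFinP _ _).2 mr)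
     (fun x _ => (ler01 : (0 <= (cst 1%R x)%:E)))); last by apply/measurable_EFinP; exact: measurable_cst.
  by rewrite int_r int_one.
have Xfin : X \is a fin_num by rewrite ge0_fin_numE// (le_lt_trans X2)// ltry.
set t := fine X.
have Xt : X = t%:E by rewrite /t fineK.
rewrite TVe Xt lee_fin in Htv.
have t0 : (0 < t)%R by exact: (lt_le_trans v0 Htv).
pose l := (v / t)%R.
have l0 : (0 < l)%R by rewrite /l divr_gt0.
have l1 : (l <= 1)%R by rewrite /l ler_pdivrMr// mul1r.
pose g := fun x => (l * r x + (1 - l))%R.
have g0 : forall x, (0 <= g x)%R.
  by move=> x; rewrite /g; have := r0 x; nra.
have mg : measurable_fun setT g.
  apply: measurable_funD => //; apply: measurable_funM => //.
have g1 : \int[Q]_x (g x)%:E = 1.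
  rewrite /g; under eq_integral do rewrite EFinD.
  have h1 : forall x, [set: T] x -> 0 <= (l * r x)%:E.
    by move=> x _; rewrite lee_fin; have := r0 x; nra.
  have h2 : measurable_fun setT (fun x => (l * r x)%:E).
    by apply/measurable_EFinP; apply: measurable_funM.
  have h3 : forall x, [set: T] x -> 0 <= (1 - l)%:E.
    by move=> x _; rewrite lee_fin; lra.
  have h4 : measurable_fun setT (fun x : T => (1 - l)%:E) by [].
  rewrite (ge0_integralD Q measurableT h1 h2 h3 h4).
  have h5 : forall x, [set: T] x -> 0 <= (r x)%:E by move=> x _; rewrite lee_fin.
  have h6 : measurable_fun setT (fun x => (r x)%:E) by exact/measurable_EFinP.
  under eq_integral do rewrite EFinM.
  rewrite (ge0_integralZl_EFin Q measurableT h5 h6 (ltW l0)).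
  have := @integral_cst _ _ _ Q setT measurableT (1 - l)%:E.
  move=> ->; rewrite int_r.
  rewrite [X in _ + _ * X](_ : _ = 1); last exact: probability_setT.
  by rewrite mule1 mule1 -EFinD; congr EFin; ring.
pose Pg : probability T R := dprob g0 mg g1.
have PAg : forall A, measurable A -> Pg A = \int[Q]_(x in A) (g x)%:E by [].
apply: (@le_trans _ _ (KL Pg Q)).
  apply: ereal_inf_lbound; exists d, T, mu, Pg, Q; split => //.
  - by move=> A /Qmu /(dens_dom mg PAg).
  - rewrite (TV_dens g0 mg PAg Qmu).
    have eqg : forall x, (`|g x - 1|)%:E = l%:E * (`|r x - 1|)%:E.
      move=> x; rewrite -EFinM; congr EFin.
      rewrite /g (_ : l * r x + (1 - l) - 1 = l * (r x - 1))%R; last by ring.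
      by rewrite normrM ger0_norm// ltW.
    rewrite (eq_integral (fun x => l%:E * (`|r x - 1|)%:E)); last by move=> x _; exact: eqg.
    have h5 : forall x, [set: T] x -> 0 <= (`|r x - 1|)%:E by move=> x _; rewrite lee_fin.
    have h6 : measurable_fun setT (fun x => (`|r x - 1|)%:E).
      apply/measurable_EFinP; apply: measurableT_comp => //.
      exact: measurable_funB.
    rewrite (ge0_integralZl_EFin Q measurableT h5 h6 (ltW l0)).
    rewrite -/X Xt -EFinM; congr EFin.
    by rewrite /l mulrAC -mulrA mulfV ?gt_eqF// mulr1.
rewrite (KL_dens g0 mg PAg) KLe.
have mphi : measurable_fun setT (fun x => r x * ln (r x))%R.
  by apply: measurable_funM => //; apply: measurableT_comp.
have mphig : measurable_fun setT (fun x => g x * ln (g x))%R.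
  by apply: measurable_funM => //; apply: measurableT_comp.
apply: (@le_trans _ _ (\int[Q]_x (l * (r x * ln (r x)))%:E)).
  apply: le_int_meas => //.
  - exact/measurable_EFinP.
  - by apply/measurable_EFinP; apply: measurable_funM.
  - move=> x _; rewrite lee_fin /g; apply: conv_ineq => //.
    by rewrite l0 l1.
have negfin : \int[Q]_x (fun x => (r x * ln (r x))%:E)^\- x < +oo.
  apply: (@le_lt_trans _ _ (\int[Q]_x (cst 1%R x)%:E)); last by rewrite int_one ltry.
  apply: ge0_le_integral => //.
  all: try by move=> x _; exact: funeneg_ge0.
  all: try by apply: measurable_funeneg; exact/measurable_EFinP.
  all: try by apply/measurable_EFinP; exact: measurable_cst.
  + move=> x _; rewrite funenegE /=.
    have := xlnx_ge (r0 x) => h.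
    rewrite ge_max; apply/andP; split; rewrite ?lee_fin//.
    by have := r0 x; lra.
rewrite int_scale//; last exact: ltW.
set Y := \int[Q]_x (r x * ln (r x))%:E.
have Y0 : 0 <= Y.
  apply: (@le_trans _ _ (\int[Q]_x ((r x)%:E - (cst 1%R x)%:E))).
    rewrite integralB_EFin//; first by rewrite int_r int_one subee.
    - exact: gint r0 mr PA.
    - exact: finite_measure_integrable_cst.
  apply: le_int_meas => //.
  - apply: emeasurable_funB; [exact/measurable_EFinP|].
    by apply/measurable_EFinP; exact: measurable_cst.
  - exact/measurable_EFinP.
  - by move=> x _; rewrite -EFinB lee_fin; exact: xlnx_ge.
move: Y0; case: Y => [y| |] //.
- by rewrite !lee_fin => y0; nra.
- by move=> _; rewrite leey.
Qed.

End lower.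
Section two.
Context d (T : measurableType d) (R : realType).
Local Open Scope ereal_scope.
Variables (Q : probability T R) (A : set T) (x : R).
Hypotheses (mA : measurable A) (QA : Q A = x%:E).

Definition ind (a b : R) (t : T) := (a * \1_A t + b * \1_(~` A) t)%R.

Lemma two_val (F : R -> R) a b t : F (ind a b t) = ind (F a) (F b) t.
Proof.
rewrite /ind !indicE in_setC; case: (boolP (t \in A)) => tA /=.
  by rewrite !mulr1 !mulr0 !addr0.
by rewrite !mulr1 !mulr0 !add0r.
Qed.

Lemma mind a b : measurable_fun setT (ind a b).
Proof.
apply: measurable_funD; apply: measurable_funM => //;
  apply: measurable_indic => //; exact: measurableC.
Qed.

Lemma int_ind a b : \int[Q]_t (ind a b t)%:E = (a * x + b * (1 - x))%:E.
Proof.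
rewrite -(setUv A) integral_setU//; last 3 first.
- exact: measurableC.
- by rewrite setUv; apply/measurable_EFinP; exact: mind.
- by apply/disj_setPCl.
rewrite (eq_integral (cst a%:E)); last first.
  by move=> t tA; rewrite /ind !indicE in_setC tA /= mulr1 mulr0 addr0.
rewrite [X in _ + X](eq_integral (cst b%:E)); last first.
  move=> t; rewrite inE /= => tA.
  by rewrite /ind !indicE in_setC memNset //= mulr1 mulr0 add0r.
rewrite !integral_cst//; last exact: measurableC.
rewrite [X in _ + _ * X](_ : _ = 1 - x%:E); last first.
  by rewrite -QA; exact: probability_setC.
rewrite [X in _ * X + _](_ : _ = x%:E); last exact: QA.
by rewrite -EFinB -!EFinM -EFinD.
Qed.

Lemma int_indF (F : R -> R) a b : \int[Q]_t (F (ind a b t))%:E = (F a * x + F b * (1 - x))%:E.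
Proof.
under eq_integral do rewrite two_val.
exact: int_ind.
Qed.

End two.

Section upper.
Context d (T : measurableType d) (R : realType).
Local Open Scope ereal_scope.
Variables (mu : {sigma_finite_measure set T -> \bar R}) (Q : probability T R).
Hypothesis Qmu : Q `<< mu.

Definition hfun (c y : R) : R :=
  ((y - c) * ln ((y - c) / y) + (1 - (y - c)) * ln ((1 - (y - c)) / (1 - y)))%R.

Lemma upper_x (v x : R) (A : set T) : measurable A -> Q A = x%:E ->
  (0 < v)%R -> (v / 2 < x)%R -> (x < 1)%R ->
  Dstar mu v Q <= (hfun (v / 2) x)%:E.
Proof.
move=> mA QA v0 vx x1.
set c := (v / 2)%R in vx *.
have c0 : (0 < c)%R by rewrite /c divr_gt0.
have x0 : (0 < x)%R by exact: lt_trans vx.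
pose a := ((x - c) / x)%R.
pose b := ((1 - (x - c)) / (1 - x))%R.
have a0 : (0 < a)%R by rewrite /a divr_gt0// subr_gt0.
have b0 : (0 < b)%R by rewrite /b divr_gt0// subr_gt0; lra.
pose g := ind A a b.
have g0 : forall t, (0 <= g t)%R.
  by move=> t; rewrite /g /ind !indicE in_setC; case: (t \in A) => /=;
    rewrite ?mulr1 ?mulr0 ?addr0 ?add0r ltW.
have mg : measurable_fun setT g by exact: mind.
have g1 : \int[Q]_t (g t)%:E = 1.
  rewrite /g (int_ind mA QA); congr EFin.
  rewrite /a /b; field; apply/andP; split; rewrite ?gt_eqF//; lra.
pose Pg : probability T R := dprob g0 mg g1.
have PAg : forall B, measurable B -> Pg B = \int[Q]_(x in B) (g x)%:E by [].
have ax : (a * x = x - c)%R by rewrite /a mulrAC -mulrA mulfV ?gt_eqF// mulr1.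
have bx : (b * (1 - x) = 1 - (x - c))%R.
  by rewrite /b mulrAC -mulrA mulfV ?mulr1// gt_eqF// subr_gt0.
apply: (@le_trans _ _ (KL Pg Q)).
  apply: ereal_inf_lbound; exists Pg => //; split.
    by move=> B /Qmu /(dens_dom mg PAg).
  rewrite (TV_dens g0 mg PAg Qmu).
  rewrite (int_indF mA QA (fun y : R => `|y - 1|)%R) lee_fin.
  have e1 : (`|a - 1| * x = c)%R.
    rewrite distrC ger0_norm; last by rewrite subr_ge0 -(ler_pM2r x0) ax mul1r; lra.
    by rewrite mulrBl ax mul1r; ring.
  have e2 : (`|b - 1| * (1 - x) = c)%R.
    rewrite ger0_norm; last first.
      rewrite subr_ge0 -(ler_pM2r (_ : 0 < 1 - x)%R) ?bx ?mul1r; lra.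
    by rewrite mulrBl bx mul1r; ring.
  by rewrite e1 e2 /c; lra.
rewrite (KL_dens g0 mg PAg) /g (int_indF mA QA (fun y : R => y * ln y)%R) lee_fin.
rewrite /hfun -/a -/b -bx -ax.
by rewrite le_eqVlt; apply/orP; left; apply/eqP; ring.
Qed.

End upper.
Section hcont.
Context (R : realType).

Lemma cont_quot (c y0 : R) : y0 != 0 ->
  (fun y => (y - c) / y) y @[y --> y0] --> (y0 - c) / y0.
Proof.
move=> y00; apply: cvgM.
  by apply: cvgB; [exact: cvg_id|exact: cvg_cst].
exact: cvgV.
Qed.

Lemma cont_quot2 (c y0 : R) : 1 - y0 != 0 ->
  (fun y => (1 - (y - c)) / (1 - y)) y @[y --> y0] --> (1 - (y0 - c)) / (1 - y0).
Proof.
move=> y00; apply: cvgM.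
  apply: cvgB; first exact: cvg_cst.
  by apply: cvgB; [exact: cvg_id|exact: cvg_cst].
apply: cvgV => //.
by apply: cvgB; [exact: cvg_cst|exact: cvg_id].
Qed.

Lemma hcont (c y0 : R) : 0 < c -> c < y0 -> y0 < 1 -> {for y0, continuous (hfun c)}.
Proof.
move=> c0 cy y1.
rewrite /hfun; apply: cvgD.
  apply: cvgM; first by apply: cvgB; [exact: cvg_id|exact: cvg_cst].
  have h1 : y0 != 0 by rewrite gt_eqF//; lra.
  have h2 : 0 < (y0 - c) / y0 by apply: divr_gt0; lra.
  have L1 : {for y0, continuous (fun y => ln ((y - c) / y))}.
    apply: (continuous_comp (f := fun y => (y - c) / y)).
      exact: cont_quot.
    exact: continuous_ln.
  exact: L1.
apply: cvgM.
  apply: cvgB; first exact: cvg_cst.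
  by apply: cvgB; [exact: cvg_id|exact: cvg_cst].
have h1 : 1 - y0 != 0 by rewrite gt_eqF//; lra.
have h2 : 0 < (1 - (y0 - c)) / (1 - y0) by apply: divr_gt0; lra.
have L1 : {for y0, continuous (fun y => ln ((1 - (y - c)) / (1 - y)))}.
  apply: (continuous_comp (f := fun y => (1 - (y - c)) / (1 - y))).
    exact: cont_quot2.
  exact: continuous_ln.
exact: L1.
Qed.

End hcont.
End Helpers.
Import Helpers.
Unset Implicit Arguments. Set Strict Implicit.
Import Order.TTheory GRing.Theory Num.Theory.
Local Open Scope classical_set_scope.
Local Open Scope ring_scope.
Theorem theorem1 (R : realType) (d : measure_display) (T : measurableType d)
  (mu : {sigma_finite_measure set T -> \bar R}) (Q : probability T R) :
  Pcal mu Q ->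
  forall v : R, 0 < v < 1 ->
    (Vajda v <= Dstar mu v Q)%E /\
    (Dstar mu v Q <= KL2 (balance Q - v / 2) (balance Q))%E.
Proof.
move=> HQ v /andP[v0 v1].
have Qmu : Q `<< mu := HQ.
split.
  apply/ereal_infP => _ [P [_ Htv] <-].
  refine (@lower_one _ _ _ mu Q Qmu P v v0 Htv).
set S := [set x | rangeQ Q x /\ 1/2 <= x].
have -> : balance Q = inf S by [].
set b := inf S.
have S1 : S 1.
  split; last by lra.
  by exists setT => //; exact: probability_setT.
have hlb : has_lbound S by exists (1/2) => x [].
have Sne : S !=set0 by exists 1.
have b12 : 1/2 <= b by apply: lb_le_inf => // x [].
have b1 : b <= 1 by exact: ge_inf hlb _ S1.
set c := v / 2.
have c0 : 0 < c by rewrite /c divr_gt0.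
have cb : c < b by rewrite /c; lra.
have [bl1|bge1] := ltP b 1; last first.
  have -> : b = 1 by lra.
  rewrite /KL2 /xlnxy subrr eqxx.
  have -> : (1 - (1 - c) == 0) = false by apply/negbTE; rewrite gt_eqF//; lra.
  have -> : (1 - c == 0) = false by apply/negbTE; rewrite gt_eqF//; lra.
  by rewrite oner_eq0 addey// leey.
have -> : KL2 (b - c) b = (hfun c b)%:E.
  rewrite /KL2 /xlnxy /hfun.
  have -> : (b - c == 0) = false by apply/negbTE; rewrite gt_eqF//; lra.
  have -> : (b == 0) = false by apply/negbTE; rewrite gt_eqF//; lra.
  have -> : (1 - (b - c) == 0) = false by apply/negbTE; rewrite gt_eqF//; lra.
  have -> : (1 - b == 0) = false by apply/negbTE; rewrite gt_eqF//; lra.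
  by [].
apply/lee_addgt0Pr => e e0.
have := hcont c0 cb bl1; move/cvgrPdist_lt => /(_ e e0).
case=> dl /= dl0 Hdl.
have eps0 : 0 < Num.min dl ((1 - b) / 2).
  by rewrite lt_min dl0 /= divr_gt0// subr_gt0.
have [y Sy yb] := inf_adherent eps0 (conj Sne hlb).
have by_ : b <= y by exact: ge_inf hlb _ Sy.
have ydl : y < b + dl.
  by apply: (lt_le_trans yb); rewrite lerD2l ge_min lexx.
have y1 : y < 1.
  apply: (lt_le_trans yb).
  have : Num.min dl ((1 - b) / 2) <= (1 - b) / 2 by rewrite ge_min lexx orbT.
  lra.
case: Sy => [[A mA QA] y12].
apply: (le_trans (upper_x Qmu mA QA v0 _ y1)); first by rewrite -/c; lra.
rewrite -/c -EFinD lee_fin.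
have : `|hfun c b - hfun c y| < e.
  apply: Hdl; rewrite /ball_ /=.
  by rewrite distrC ger0_norm ?subr_ge0//; lra.
rewrite ltr_norml => /andP[h1 h2]; lra.
Qed.
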